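(* Let $B=(A,\mathcal R)$ be a blueprint, $\sim$ a congruence on $B$, and $i:B\to B_{\mathbb Z}$ the canonical map. Then $$I_{\mathbb Z}(\sim)=\Big\{\textstyle\sum_k i(c_k)-\sum_k i(d_k)\ :\ c_k,d_k\in B,\ c_k\sim d_k\text{ for all }k\Big\}$$ is an ideal of the ring $B_{\mathbb Z}$, and $(B/\sim)_{\mathbb Z}\cong B_{\mathbb Z}/I_{\mathbb Z}(\sim)$ canonically (compatibly with the maps from $\mathbb Z[A]$). If $\sim=\sim_I$ for an ideal $I$ of $B$, then $$I_{\mathbb Z}(\sim_I)=\Big\{\textstyle\sum_k i(c_k)-\sum_k i(d_k)\ :\ c_k,d_k\in I\Big\}.$$
   Context: A monoid is a commutative semigroup $A$, written multiplicatively, with neutral element $1$. For a monoid $A$, $\mathbb N[A]$ denotes the semiring of finite formal sums $\sum a_i$ of elements $a_i\in A$ (repetitions allowed), with empty sum $\underline0$ and multiplication extended bilinearly from $A$. A pre-addition on $A$ is a relation $\mathcal R\subseteq\mathbb N[A]\times\mathbb N[A]$, written $\sum a_i\equiv\sum b_j$, which is an equivalence relation and satisfies: if $\sum a_i\equiv\sum b_j$ and $\sum c_k\equiv\sum d_l$, then $\sum a_i+\sum c_k\equiv\sum b_j+\sum d_l$ and $\sum_{i,k}a_ic_k\equiv\sum_{j,l}b_jd_l$. A blueprint $B=(A,\mathcal R)$ is a monoid $A$ with a pre-addition $\mathcal R$; we write $a\in B$ for $a\in A$. An element $e$ with $e\equiv\underline0$ is a zero of $B$. $B_{\mathbb Z}$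 is the ring $\mathbb Z[A]/\mathcal I(\mathcal R)$, where $\mathbb Z[A]$ is the monoid ring and $\mathcal I(\mathcal R)=\{\sum a_i-\sum b_j:\sum a_i\equiv\sum b_j\}$ (an ideal); $i:B\to B_{\mathbb Z}$ is induced by $A\to\mathbb Z[A]$. For an equivalence relation $\sim$ on $A$, its linear extension $\sim_{\mathbb N}$ is the equivalence relation on $\mathbb N[A]$ generated by $\sum_{i=1}^n a_i\sim_{\mathbb N}\sum_{i=1}^n b_i$ whenever $a_i\sim b_i$ for all $i$; $\sim_{\mathcal R}$ is the smallest equivalence relation on $\mathbb N[A]$ containing $\mathcal R$ and $\sim_{\mathbb N}$. A congruence on $B$ is an equivalence relation $\sim$ on $A$ such that (C1) $\sim_{\mathbb N}$ is a pre-addition on $A$, and (C2) the restriction of $\sim_{\mathcal R}$ to $A$ equals $\sim$. The quotient $B/\sim$ has monoid $A/\sim$ and the smallest pre-addition containing all $\sum[a_i]\equiv\sum[b_j]$ with $\sum a_i\equiv\sum b_j$ in $B$. For a subset $I\subseteq B$, $a\sim^I b$ iff $a=b$ or $a,b\in I$; and $a\sim_I b$ iff there is a finite sequence $a\equiv\sum_k c_{1,k}\sim^I_{\mathbb N}\sum_k d_{1,k}\equiv\cdots\sim^I_{\mathbb N}\sum_k d_{n,k}\equiv b$ with $c_{i,k},d_{i,k}\in A$. An ideal of $B$ is a subset $I$ with (I1) $IB\subseteq I$; (I2) every zero of $B$ lies in $I$; (I3) if $a\sim_I b$ and $b\in I$ then $a\in I$. For an ideal $I$ containing all absorbing elements (elements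 $e$ with $eb\equiv e$ for all $b$), $\sim_I$ is a congruence. *)

(* Defs.v *)
From Stdlib Require Import List Permutation Relations.
Import ListNotations.

Record Monoid := {
  mcar : Type;
  mmul : mcar -> mcar -> mcar;
  mone : mcar;
  mmul_assoc : forall a b c, mmul a (mmul b c) = mmul (mmul a b) c;
  mmul_comm : forall a b, mmul a b = mmul b a;
  mmul_1l : forall a, mmul mone a = a
}.

(** Elements of N[A] are represented by lists (equality in N[A] = Permutation).
    Sum = concatenation, empty sum = nil, product extended bilinearly. *)
Definition nprod (M : Monoid) (s t : list (mcar M)) : list (mcar M) :=
  flat_map (fun a => map (mmul M a) t) s.

(** A pre-addition: an equivalence relation on N[A] (hence compatible with
    Permutation of representatives), closed under sums and products. *)
Definition pre_addition (M : Monoid) (R : list (mcar M) -> list (mcar M) -> Prop) : Prop :=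
  (forall s, R s s) /\
  (forall s t, R s t -> R t s) /\
  (forall s t u, R s t -> R t u -> R s u) /\
  (forall s s' t t', Permutation s s' -> Permutation t t' -> R s t -> R s' t') /\
  (forall s t u v, R s t -> R u v -> R (s ++ u) (t ++ v)) /\
  (forall s t u v, R s t -> R u v -> R (nprod M s u) (nprod M t v)).

Record Blueprint := {
  bmon : Monoid;
  bR : list (mcar bmon) -> list (mcar bmon) -> Prop;
  bR_pre : pre_addition bmon bR
}.

Definition bcar (B : Blueprint) : Type := mcar (bmon B).

(** Linear extension of an equivalence relation on A to N[A]: the equivalence
    relation generated by  sum a_i ~ sum b_i  whenever a_i ~ b_i for all i
    (on list representatives we also include Permutation = equality in N[A]). *)
Definition linext {A : Type} (sim : A -> A -> Prop) : list A -> list A -> Prop :=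
  clos_refl_sym_trans (list A) (fun s t => Forall2 sim s t \/ Permutation s t).

Definition simR (B : Blueprint) (sim : bcar B -> bcar B -> Prop) :
  list (bcar B) -> list (bcar B) -> Prop :=
  clos_refl_sym_trans (list (bcar B)) (fun s t => bR B s t \/ linext sim s t).

Definition is_equiv {A : Type} (r : A -> A -> Prop) : Prop :=
  (forall a, r a a) /\ (forall a b, r a b -> r b a) /\
  (forall a b c, r a b -> r b c -> r a c).

Definition is_congruence (B : Blueprint) (sim : bcar B -> bcar B -> Prop) : Prop :=
  is_equiv sim /\
  pre_addition (bmon B) (linext sim) /\
  (forall a b, simR B sim [a] [b] <-> sim a b).

(** Pre-addition of B/~, pulled back to list representatives in N[A]:
    the smallest pre-addition containing R and ~_N (the latter being
    equality in N[A/~]). *)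
Definition quotR (B : Blueprint) (sim : bcar B -> bcar B -> Prop)
  (s t : list (bcar B)) : Prop :=
  forall Q : list (bcar B) -> list (bcar B) -> Prop,
    pre_addition (bmon B) Q ->
    (forall u v, bR B u v -> Q u v) ->
    (forall u v, linext sim u v -> Q u v) ->
    Q s t.

(** Z[A] : formal differences (positive part, negative part) of elements of N[A]. *)
Definition ZA (A : Type) : Type := (list A * list A)%type.
Definition z0 {A : Type} : ZA A := ([], []).
Definition zadd {A : Type} (x y : ZA A) : ZA A := (fst x ++ fst y, snd x ++ snd y).
Definition zneg {A : Type} (x : ZA A) : ZA A := (snd x, fst x).
Definition zsub {A : Type} (x y : ZA A) : ZA A := zadd x (zneg y).
Definition zmul (M : Monoid) (x y : ZA (mcar M)) : ZA (mcar M) :=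
  (nprod M (fst x) (fst y) ++ nprod M (snd x) (snd y),
   nprod M (fst x) (snd y) ++ nprod M (snd x) (fst y)).

Definition zeqE {A : Type} (E : list A -> list A -> Prop) (x y : ZA A) : Prop :=
  E (fst x ++ snd y) (fst y ++ snd x).

(** Equality in the quotient ring Z[A]/I(R), I(R) = { sum a_i - sum b_j : R }. *)
Definition qeq {A : Type} (E : list A -> list A -> Prop)
  (R : list A -> list A -> Prop) (x y : ZA A) : Prop :=
  exists u v, R u v /\ zeqE E (zsub x y) (u, v).

(** Equality in B_Z (elements represented by elements of Z[A]). *)
Definition bz_eq (B : Blueprint) : ZA (bcar B) -> ZA (bcar B) -> Prop :=
  qeq (@Permutation (bcar B)) (bR B).

(** Equality in (B/~)_Z, with Z[A/~] elements represented by elements of Z[A]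
    (the map Z[A] -> Z[A/~] being the identity on representatives). *)
Definition quot_bz_eq (B : Blueprint) (sim : bcar B -> bcar B -> Prop) :
  ZA (bcar B) -> ZA (bcar B) -> Prop :=
  qeq (linext sim) (quotR B sim).

Definition incl {A : Type} (a : A) : ZA A := ([a], []).

(** I_Z(~) = { sum_k i(c_k) - sum_k i(d_k) : c_k ~ d_k }, as a subset of B_Z
    (given by a predicate on representatives, saturated for bz_eq). *)
Definition IZ (B : Blueprint) (sim : bcar B -> bcar B -> Prop) (x : ZA (bcar B)) : Prop :=
  exists cs ds : list (bcar B), Forall2 sim cs ds /\ bz_eq B x (cs, ds).

Definition ring_ideal (M : Monoid) (eqv : ZA (mcar M) -> ZA (mcar M) -> Prop)
  (P : ZA (mcar M) -> Prop) : Prop :=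
  (forall x y, eqv x y -> P x -> P y) /\
  P z0 /\
  (forall x y, P x -> P y -> P (zadd x y)) /\
  (forall x, P x -> P (zneg x)) /\
  (forall r x, P x -> P (zmul M r x)).

Definition simI0 (B : Blueprint) (I : bcar B -> Prop) (a b : bcar B) : Prop :=
  a = b \/ (I a /\ I b).

(** a ~_I b : a == sum c_1 ~^I_N sum d_1 == ... ~^I_N sum d_n == b. *)
Inductive Ichain (B : Blueprint) (I : bcar B -> Prop) :
  list (bcar B) -> list (bcar B) -> Prop :=
| ich_one s c d t :
    bR B s c -> linext (simI0 B I) c d -> bR B d t -> Ichain B I s t
| ich_cons s c d t :
    bR B s c -> linext (simI0 B I) c d -> Ichain B I d t -> Ichain B I s t.

Definition simI (B : Blueprint) (I : bcar B -> Prop) (a b : bcar B) : Prop :=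
  Ichain B I [a] [b].

Definition is_bp_ideal (B : Blueprint) (I : bcar B -> Prop) : Prop :=
  (forall a b, I a -> I (mmul (bmon B) a b)) /\
  (forall e, bR B [e] [] -> I e) /\
  (forall a b, simI B I a b -> I b -> I a).

(* Main.v *)
Require Import Defs.
From Stdlib Require Import List Permutation Relations.
Import ListNotations.

Lemma perm_concat {A} (L R : list (list A)) : Permutation L R -> Permutation (concat L) (concat R).
Proof.
  induction 1; simpl; auto.
  - apply Permutation_app_head; auto.
  - rewrite !app_assoc. apply Permutation_app_tail, Permutation_app_comm.
  - eapply Permutation_trans; eauto.
Qed.

Lemma perm_concat_eq {A} (L R : list (list A)) l r :
  concat L = l -> concat R = r -> Permutation L R -> Permutation l r.
Proof. intros <- <-. apply perm_concat. Qed.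

Ltac reify l acc :=
  lazymatch l with
  | ?a ++ ?b => let rb := reify b acc in reify a rb
  | @nil _ => acc
  | _ => constr:(l :: acc)
  end.

Ltac move_front :=
  lazymatch goal with
  | |- Permutation (?a :: ?t) (?a :: ?t) => reflexivity
  | |- Permutation (?a :: ?b :: ?t') (?b :: ?t) =>
      eapply perm_trans; [apply perm_swap | apply perm_skip; move_front]
  end.

Ltac remove a r :=
  lazymatch r with
  | a :: ?t => constr:(t)
  | ?b :: ?t => let t' := remove a t in constr:(b :: t')
  end.

Ltac solve_perm :=
  lazymatch goal with
  | |- Permutation nil nil => constructor
  | |- Permutation (?a :: ?l) ?r =>
      let r' := remove a r in
      apply (perm_trans (l' := a :: r')); [apply perm_skip; solve_perm | move_front]
  end.

Ltac concat_eq := cbn [concat]; rewrite ?app_nil_r, ?app_assoc; reflexivity.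

Ltac perm_norm :=
  lazymatch goal with
  |- Permutation ?l ?r =>
    let T := type of l in
    lazymatch T with list ?A =>
    let L := reify l (@nil (list A)) in let R := reify r (@nil (list A)) in
    apply (perm_concat_eq L R); [ concat_eq | concat_eq | solve_perm ] end
  end.

Lemma perm_via {A} (C D a b : list A) : Permutation C D -> Permutation a C -> Permutation D b -> Permutation a b.
Proof. intros; eapply Permutation_trans; [eauto|eapply Permutation_trans; eauto]. Qed.


Section NP.
Variable M : Monoid.
Lemma nprod_app_l s t u : nprod M (s ++ t) u = nprod M s u ++ nprod M t u.
Proof. unfold nprod. apply flat_map_app. Qed.
Lemma nprod_nil_r s : nprod M s [] = [].
Proof. induction s; simpl; auto. Qed.
Lemma nprod_app_r s u v : Permutation (nprod M s (u ++ v)) (nprod M s u ++ nprod M s v).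
Proof.
  induction s as [|a s IH]; simpl; auto.
  rewrite map_app. eapply Permutation_trans. apply Permutation_app_head, IH.
  perm_norm.
Qed.
Lemma nprod_perm_l s s' u : Permutation s s' -> Permutation (nprod M s u) (nprod M s' u).
Proof.
  induction 1; simpl; auto.
  - apply Permutation_app_head; auto.
  - perm_norm.
  - eapply Permutation_trans; eauto.
Qed.
Lemma nprod_perm_r s u u' : Permutation u u' -> Permutation (nprod M s u) (nprod M s u').
Proof.
  intro H; induction s; simpl; auto.
  apply Permutation_app; auto. apply Permutation_map; auto.
Qed.
Lemma flat_map_cons_perm {A} (f : A -> mcar M) g t :
  Permutation (flat_map (fun b => f b :: g b) t) (map f t ++ flat_map g t).
Proof.
  induction t; simpl; auto.
  apply perm_skip. eapply Permutation_trans. apply Permutation_app_head, IHt. perm_norm.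
Qed.
Lemma nprod_comm s t : Permutation (nprod M s t) (nprod M t s).
Proof.
  induction s as [|a s IH]; simpl.
  - rewrite nprod_nil_r; auto.
  - unfold nprod at 2. simpl.
    eapply Permutation_trans; [|apply Permutation_sym, flat_map_cons_perm].
    apply Permutation_app; auto.
    erewrite map_ext; [apply Permutation_refl|]. intros; apply mmul_comm.
Qed.
End NP.

Section BP.
Variable B : Blueprint.
Notation R := (bR B).
Notation M := (bmon B).
Lemma R_refl s : R s s. Proof. destruct (bR_pre B) as (?&?&?&?&?&?); eauto. Qed.
Lemma R_sym s t : R s t -> R t s. Proof. destruct (bR_pre B) as (?&?&?&?&?&?); eauto. Qed.
Lemma R_app s t u v : R s t -> R u v -> R (s ++ u) (t ++ v). Proof. destruct (bR_pre B) as (?&?&?&?&?&?); eauto. Qed.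
Lemma R_mul s t u v : R s t -> R u v -> R (nprod M s u) (nprod M t v). Proof. destruct (bR_pre B) as (?&?&?&?&?&?); eauto. Qed.

Lemma bz_def (x y : ZA (bcar B)) : bz_eq B x y <->
  exists u v, R u v /\ Permutation (fst x ++ snd y ++ v) (u ++ snd x ++ fst y).
Proof.
  destruct x, y; unfold bz_eq, qeq, zeqE, zsub, zadd, zneg; simpl.
  split; intros (u&v&H1&H2); exists u, v; split; auto; (eapply Permutation_trans; [|eapply Permutation_trans; [apply H2|]]); perm_norm.
Qed.

Lemma bz_perm (x y : ZA (bcar B)) : Permutation (fst x ++ snd y) (snd x ++ fst y) -> bz_eq B x y.
Proof. intro H. apply bz_def. exists [], []. split. apply R_refl.
  eapply perm_via. apply H. perm_norm. perm_norm. Qed.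

Lemma bz_refl x : bz_eq B x x.
Proof. apply bz_perm. perm_norm. Qed.

Lemma bz_sym x y : bz_eq B x y -> bz_eq B y x.
Proof. rewrite !bz_def. intros (u&v&H1&H2). exists v,u. split. apply R_sym; auto.
  apply Permutation_sym. eapply perm_via. apply H2. perm_norm. perm_norm. Qed.

Lemma bz_trans x y z : bz_eq B x y -> bz_eq B y z -> bz_eq B x z.
Proof. rewrite !bz_def. intros (u&v&H1&H2) (u'&v'&H1'&H2'). exists (u++u'), (v++v').
  split. apply R_app; auto.
  apply (Permutation_app_inv_l (fst y ++ snd y)).
  eapply perm_via. apply (Permutation_app H2 H2'). perm_norm. perm_norm. Qed.

Lemma bz_add x x' y y' : bz_eq B x x' -> bz_eq B y y' -> bz_eq B (zadd x y) (zadd x' y').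
Proof. rewrite !bz_def. intros (u&v&H1&H2) (u'&v'&H1'&H2'). exists (u++u'), (v++v').
  split. apply R_app; auto. destruct x,y,x',y'; unfold zadd; simpl in *.
  eapply perm_via. apply (Permutation_app H2 H2'). perm_norm. perm_norm. Qed.

Lemma bz_neg x y : bz_eq B x y -> bz_eq B (zneg x) (zneg y).
Proof. rewrite !bz_def. intros (u&v&H1&H2). exists v,u. split. apply R_sym; auto.
  destruct x,y; unfold zneg; simpl in *.
  apply Permutation_sym. eapply perm_via. apply H2. perm_norm. perm_norm. Qed.

Lemma distr3 s a b c : Permutation (nprod M s (a ++ b ++ c)) (nprod M s a ++ nprod M s b ++ nprod M s c).
Proof. eapply Permutation_trans. apply nprod_app_r. apply Permutation_app_head, nprod_app_r. Qed.

Lemma bz_mul r x y : bz_eq B x y -> bz_eq B (zmul M r x) (zmul M r y).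
Proof. rewrite !bz_def. intros (u&v&H1&H2).
  destruct r as [r1 r2], x as [x1 x2], y as [y1 y2]; simpl in *.
  exists (nprod M r1 u ++ nprod M r2 v), (nprod M r1 v ++ nprod M r2 u). split.
  - apply R_app; apply R_mul; auto using R_refl, R_sym.
  - pose proof (nprod_perm_r M r1 _ _ H2) as P1.
    pose proof (nprod_perm_r M r2 _ _ H2) as P2.
    assert (Q1 := perm_via _ _ _ _ P1 (Permutation_sym (distr3 _ _ _ _)) (distr3 _ _ _ _)).
    assert (Q2 := perm_via _ _ _ _ P2 (Permutation_sym (distr3 _ _ _ _)) (distr3 _ _ _ _)).
    apply Permutation_sym in Q2.
    eapply perm_via. apply (Permutation_app Q1 Q2). perm_norm. perm_norm.
Qed.

Section J.
Variable r : bcar B -> bcar B -> Prop.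
Lemma J_sat x y : IZ B r y -> bz_eq B x y -> IZ B r x.
Proof. intros (cs&ds&F&E) H. exists cs, ds. split; auto. eapply bz_trans; eauto. Qed.
Lemma J_zero : IZ B r z0.
Proof. exists [], []. split. constructor. apply bz_refl. Qed.
Lemma J_add x y : IZ B r x -> IZ B r y -> IZ B r (zadd x y).
Proof. intros (cs&ds&F&E) (cs'&ds'&F'&E'). exists (cs++cs'), (ds++ds'). split.
  apply Forall2_app; auto. apply (bz_add _ _ _ _ E E'). Qed.
Hypothesis rsym : forall a b, r a b -> r b a.
Lemma F2_sym cs ds : Forall2 r cs ds -> Forall2 r ds cs.
Proof. induction 1; constructor; auto. Qed.
Lemma J_neg x : IZ B r x -> IZ B r (zneg x).
Proof. intros (cs&ds&F&E). exists ds, cs. split. apply F2_sym; auto. apply (bz_neg _ _ E). Qed.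
Definition Q s t := IZ B r (s, t).
Lemma Q_refl s : Q s s.
Proof. exists [], []. split. constructor. apply bz_perm. simpl. perm_norm. Qed.
Lemma Q_sym s t : Q s t -> Q t s.
Proof. intro H. apply (J_neg _ H). Qed.
Lemma Q_trans s t u : Q s t -> Q t u -> Q s u.
Proof. intros H H'. eapply J_sat. apply (J_add _ _ H H'). apply bz_perm. simpl. perm_norm. Qed.
Lemma Q_perm s s' t t' : Permutation s s' -> Permutation t t' -> Q s t -> Q s' t'.
Proof. intros P P' H. eapply J_sat. apply H. apply bz_perm. simpl.
  eapply perm_via; [apply (Permutation_app (Permutation_sym P) P') | perm_norm | perm_norm]. Qed.
Lemma Q_R s t : R s t -> Q s t.
Proof. intro H. exists [], []. split. constructor. apply bz_def. exists s, t. split; auto. simpl. perm_norm. Qed.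
Lemma Q_F2 s t : Forall2 r s t -> Q s t.
Proof. intro H. exists s, t. split; auto. apply bz_refl. Qed.
Lemma Q_linext (r' : bcar B -> bcar B -> Prop) s t :
  (forall s t, Forall2 r' s t -> Q s t) -> linext r' s t -> Q s t.
Proof. intros Hb H. induction H as [s t [H|H]| | |].
  - auto.
  - eapply Q_perm. apply Permutation_refl. apply H. apply Q_refl.
  - apply Q_refl.
  - apply Q_sym; auto.
  - eapply Q_trans; eauto.
Qed.
End J.
End BP.

Theorem mainTheorem12 (B : Blueprint) (sim : bcar B -> bcar B -> Prop) :
  is_congruence B sim ->
  ring_ideal (bmon B) (bz_eq B) (IZ B sim) /\
  (forall x y : ZA (bcar B), quot_bz_eq B sim x y <-> IZ B sim (zsub x y)) /\
  (forall I : bcar B -> Prop,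
     is_bp_ideal B I ->
     (forall a b, sim a b <-> simI B I a b) ->
     forall x : ZA (bcar B),
       IZ B sim x <->
       exists cs ds : list (bcar B),
         Forall2 (fun c d => I c /\ I d) cs ds /\ bz_eq B x (cs, ds)).
Proof.
  intros [[srefl [ssym strans]] [[Lrefl [Lsym [Ltrans [Lperm [Lapp Lmul]]]]] C2]].
  assert (smul : forall a c d, sim c d -> sim (mmul (bmon B) a c) (mmul (bmon B) a d)).
  { intros a c d H. apply C2. apply rst_step. right.
    assert (H' := Lmul [a] [a] [c] [d] (Lrefl _) (rst_step _ _ _ _ (or_introl (Forall2_cons _ _ H (Forall2_nil _))))).
    exact H'. }
  assert (F2n : forall s cs ds, Forall2 sim cs ds -> Forall2 sim (nprod (bmon B) s cs) (nprod (bmon B) s ds)).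
  { intros s cs ds H. induction s as [|a s IH]; simpl. constructor.
    apply Forall2_app; auto. clear IH. induction H; simpl; constructor; auto. }
  assert (Jmul : forall r x, IZ B sim x -> IZ B sim (zmul (bmon B) r x)).
  { intros r x (cs&ds&F&E). eapply J_sat. 2: apply (bz_mul _ r _ _ E).
    destruct r as [r1 r2]. simpl. exists (nprod (bmon B) r1 cs ++ nprod (bmon B) r2 ds),
      (nprod (bmon B) r1 ds ++ nprod (bmon B) r2 cs). split.
    apply Forall2_app; apply F2n; auto using F2_sym. apply bz_refl. }
  assert (Qpre : pre_addition (bmon B) (Q B sim)).
  { repeat split.
    - apply Q_refl.
    - apply Q_sym; auto.
    - apply Q_trans; auto.
    - intros; eapply Q_perm; eauto.
    - intros s t u v H H'. apply (J_add _ _ _ _ H H').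
    - intros s t u v H H'. apply Q_trans with (nprod (bmon B) s v); auto.
      + assert (K := Jmul (s, []) _ H'). simpl in K. eapply Q_perm; [| |exact K]; rewrite app_nil_r; auto.
      + assert (K := Jmul (v, []) _ H). simpl in K. eapply Q_perm; [| |exact K]; rewrite app_nil_r; apply nprod_comm. }
  assert (QL : forall r s t, (forall a b, r a b -> r b a) -> (forall s t, Forall2 r s t -> Q B r s t) -> linext r s t -> Q B r s t).
  { intros r s t Hs Hb H. apply (Q_linext B r Hs r); auto. }
  split; [|split].
  - repeat split.
    + intros x y E H. eapply J_sat. apply H. apply bz_sym; auto.
    + apply J_zero.
    + apply J_add.
    + apply J_neg; auto.
    + apply Jmul.
  - intros [x1 x2] [y1 y2]. split.
    + intros (u&v&Hq&HL). unfold zeqE, zsub, zadd, zneg in HL; simpl in HL.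
      assert (Hu : Q B sim u v) by (apply Hq; auto; [apply Q_R | intros; apply QL; auto; intros; apply Q_F2; auto]).
      assert (Hx : Q B sim ((x1 ++ y2) ++ v) (u ++ x2 ++ y1)) by (apply QL; auto; intros; apply Q_F2; auto).
      eapply J_sat. apply (J_add _ _ _ _ Hu Hx). apply bz_perm. unfold zsub, zadd, zneg; simpl. perm_norm.
    + intros (cs&ds&F&E). apply bz_def in E. destruct E as (u&v&Hr&P).
      unfold zsub, zadd, zneg in P; simpl in P.
      exists (u ++ ds), (v ++ ds). split.
      * intros Q' HQ HR HL. destruct HQ as (?&?&?&?&Qapp&?). apply Qapp; auto.
      * unfold zeqE, zsub, zadd, zneg; simpl.
        apply rst_trans with (u ++ (x2 ++ y1) ++ cs).
        { apply rst_step. right. eapply perm_via. apply P. perm_norm. perm_norm. }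
        apply rst_trans with (u ++ (x2 ++ y1) ++ ds).
        { apply rst_step. left. apply Forall2_app. { clear -srefl. induction u; constructor; auto. }
          apply Forall2_app. { clear -srefl. induction (x2 ++ y1); constructor; auto. } auto. }
        apply rst_step. right. perm_norm.
  - intros I _ HsI x.
    set (rI := fun c d : bcar B => I c /\ I d).
    assert (rIs : forall a b, rI a b -> rI b a) by (unfold rI; tauto).
    assert (HF : forall s t, Forall2 (simI0 B I) s t -> Q B rI s t).
    { induction 1. apply Q_refl. destruct H as [<-|H].
      - eapply Q_trans; auto. 2: apply (J_add _ _ _ _ (Q_refl B rI [x0]) IHForall2).
        apply Q_refl.
      - apply (J_add _ _ _ _ (Q_F2 B rI [x0] [y] (Forall2_cons _ _ H (Forall2_nil _))) IHForall2). }
    assert (HC : forall s t, Ichain B I s t -> Q B rI s t).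
    { induction 1.
      - apply Q_trans with c; auto. apply Q_R; auto. apply Q_trans with d; auto. apply (Q_linext B rI rIs (simI0 B I)); auto. apply Q_R; auto.
      - apply Q_trans with c; auto. apply Q_R; auto. apply Q_trans with d; auto. apply (Q_linext B rI rIs (simI0 B I)); auto. }
    split.
    + intros (cs&ds&F&E). eapply J_sat. 2: apply E. clear E.
      induction F. apply Q_refl.
      apply (J_add _ _ _ _ (HC [x0] [y] (proj1 (HsI _ _) H)) IHF).
    + intros (cs&ds&F&E). exists cs, ds. split; auto.
      eapply Forall2_impl. 2: apply F. intros c d [Ic Id]. apply HsI.
      eapply ich_one. apply R_refl. 2: apply R_refl.
      apply rst_step. left. constructor; [|constructor]. right; auto.
Qed.
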